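(* Let $D\ge 1$. The underlying block design $\mathcal{F}$ of any $(T,N,D)$-tropical code is $(D-1)$-disjunct.
   Context: Tropical arithmetic on $\mathbb{R}\cup\{\infty\}$: $x\oplus y=\min(x,y)$, $x\odot y=x+y$, with $x\oplus\infty=x$ and $x\odot\infty=\infty$. For a matrix $S$ with $T$ rows and $N$ columns and a column vector $\mathbf{x}$ of length $N$, $S\odot\mathbf{x}$ is the vector whose $t$-th entry is $\min_{j}(S_{tj}+x_j)$. A $(T,N,D)$-tropical code is a matrix $S\in(\{0\}\cup\mathbb{N}\cup\{\infty\})^{T\times N}$ such that for any two distinct vectors $\mathbf{x},\mathbf{y}\in(\{0\}\cup\mathbb{N}\cup\{\infty\})^{N}$, each having at most $D$ finite entries, $S\odot\mathbf{x}\ne S\odot\mathbf{y}$. The underlying block design of $S$ is the multiset $\mathcal{F}=\{\{t\in[T]: S_{tj}<\infty\}: j\in[N]\}$ (one block per column, so $|\mathcal{F}|=N$); ''distinct blocks'' means blocks coming from distinct columns (they may coincide as sets). $\mathcal{F}$ is $m$-disjunct if $|Z\setminus(B_1\cup\dots\cup B_m)|\ge 1$ for all distinct blocks $Z,B_1,\dots,B_m\in\mathcal{F}$ (for $m=0$ this means every block is nonempty). *)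

(* Defs.v *)
From mathcomp Require Import all_boot all_algebra.
Set Implicit Arguments. Unset Strict Implicit. Unset Printing Implicit Defensive.

(* Tropical semiring on {0} ∪ N ∪ {∞}, encoded as option nat with None = ∞. *)
Definition tplus (x y : option nat) : option nat :=
  match x, y with
  | None, _ => y
  | _, None => x
  | Some a, Some b => Some (minn a b)
  end.

Definition ttimes (x y : option nat) : option nat :=
  match x, y with
  | Some a, Some b => Some (a + b)
  | _, _ => None
  end.

Definition trop_mulv (T N : nat) (S : 'M[option nat]_(T, N))
  (x : {ffun 'I_N -> option nat}) : {ffun 'I_T -> option nat} :=
  [ffun t => \big[tplus/None]_(j < N) ttimes (S t j) (x j)].

Definition nfinite (N : nat) (x : {ffun 'I_N -> option nat}) : nat :=
  #|[set j | x j != None]|.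

Definition tropical_code (T N D : nat) (S : 'M[option nat]_(T, N)) : Prop :=
  forall x y : {ffun 'I_N -> option nat},
    nfinite x <= D -> nfinite y <= D -> x != y ->
    trop_mulv S x != trop_mulv S y.

Definition block (T N : nat) (S : 'M[option nat]_(T, N)) (j : 'I_N) : {set 'I_T} :=
  [set t | S t j != None].

(* m-disjunctness of the family of blocks F (indexed by columns, so a multiset);
   "distinct blocks" = blocks of pairwise distinct columns z, b_1, ..., b_m. *)
Definition disjunct (T N : nat) (m : nat) (F : 'I_N -> {set 'I_T}) : Prop :=
  forall (z : 'I_N) (b : 'I_m -> 'I_N),
    injective b -> (forall i, b i != z) ->
    F z :\: \bigcup_(i < m) F (b i) != set0.

(* Main.v *)
Require Import Defs.
From mathcomp Require Import all_boot all_algebra.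
From HB Require Import structures.

Lemma tplusA : associative tplus.
Proof. by move=> [a|] [b|] [c|] //=; rewrite minnA. Qed.
Lemma tplusC : commutative tplus.
Proof. by move=> [a|] [b|] //=; rewrite minnC. Qed.
Lemma tplus0 : left_id None tplus.
Proof. by move=> [a|]. Qed.

HB.instance Definition _ := Monoid.isComLaw.Build (option nat) None tplus tplusA tplusC tplus0.

Lemma tplus_absorb m c r : c <= m ->
  tplus (Some m) (tplus (Some c) r) = tplus (Some c) r.
Proof.
case: r => [r|] /= cm; last by rewrite (minn_idPr cm).
by rewrite minnA (minn_idPr cm).
Qed.

Theorem mainTheorem9 (T N D : nat) (S : 'M[option nat]_(T, N)) :
  1 <= D -> tropical_code D S -> disjunct D.-1 (block S).
Proof.
move=> D1 hS z b binj bz; apply/negP => /eqP E.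
pose K := (\sum_(t < T) \sum_(j < N) odflt 0 (S t j)).+1.
have hK : forall t j a, S t j = Some a -> a < K.
  move=> t j a Ha; rewrite ltnS.
  have -> : a = odflt 0 (S t j) by rewrite Ha.
  rewrite (bigD1 t) //= (bigD1 j) //= -addnA; exact: leq_addr.
pose x := [ffun j => if j \in codom b then Some 0 else None].
pose y := [ffun j => if j == z then Some K else x j].
have zb : z \notin codom b.
  by apply/negP => /codomP [i hi]; move: (bz i); rewrite -hi eqxx.
have hx : [set j | x j != None] = [set j in codom b].
  by apply/setP => j; rewrite !inE ffunE; case: (j \in codom b).
have nx : nfinite x <= D.-1.
  rewrite /nfinite hx cardsE (card_codom binj) card_ord //.
have ny : nfinite y <= D.
  rewrite /nfinite; apply: (@leq_trans #|z |: [set j | x j != None]|).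
    apply: subset_leq_card; apply/subsetP => j; rewrite !inE ffunE.
    by case: (j == z).
  rewrite cardsU1; move: nx; rewrite /nfinite.
  move=> nx'; apply: leq_trans (leq_add (leq_b1 _) nx') _.
  by rewrite add1n prednK.
have xy : x != y.
  apply/negP => /eqP Exy; have := congr1 (fun f : {ffun 'I_N -> option nat} => f z) Exy.
  by rewrite /= !ffunE eqxx (negbTE zb).
have := hS x y (leq_trans nx (leq_pred _)) ny xy; apply/negP; rewrite negbK.
apply/eqP/ffunP => t; rewrite !ffunE (bigD1 z) //= [RHS](bigD1 z) //=.
rewrite !ffunE eqxx (negbTE zb).
have -> : \big[tplus/None]_(j < N | j != z) ttimes (S t j) (y j) =
          \big[tplus/None]_(j < N | j != z) ttimes (S t j) (x j).
  by apply: eq_bigr => j /negbTE jz; rewrite [y j]ffunE jz.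
have -> : ttimes (S t z) None = None by case: (S t z).
rewrite tplus0.
case Htz: (S t z) => [s|] //=.
have : t \in \bigcup_(i < D.-1) block S (b i).
  apply/negPn/negP => nt.
  have : t \in block S z :\: \bigcup_(i < D.-1) block S (b i).
    by rewrite inE nt /block inE Htz.
  by rewrite E inE.
case/bigcupP => i _; rewrite /block inE.
case Hti: (S t (b i)) => [c|] // _.
rewrite (bigD1 (b i)) ?bz // ffunE codom_f Hti.
have -> : ttimes (Some c) (Some 0) = Some c by rewrite /= addn0.
have hc : c <= s + K.
  by apply: leq_trans (ltnW (hK _ _ _ Hti)) _; exact: leq_addl.
move: (\big[_/_]_(_ | _) _) => r; case: r => [r|] /=.
  by rewrite minnA (minn_idPr hc).
by rewrite (minn_idPr hc).
Qed.
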